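(* Let $\rho=(a^b)$ be a partition of $n=ab$ with $a,b\ge 2$, and put $\alpha(\rho)=(a+1,a^{\,b-2},a-1)$ and $\beta(\rho)=(a^{\,b-1},a-1,1)$. Then: (1) $\deg_{G_n}(\rho)=2$; (2) the neighbors of $\rho$ in $G_n$ are exactly $\alpha(\rho)$ and $\beta(\rho)$; (3) $\rho,\alpha(\rho),\beta(\rho)$ form a triangle in $G_n$; (4) this triangle is the unique maximal clique of $G_n$ containing $\rho$; (5) consequently $\rho\in D_2(n)\cap L_2(n)$.
   Context: The partition graph $G_n$ has as vertices the integer partitions of $n$; two partitions are adjacent if one is obtained from the other by a single elementary unit transfer followed by reordering: decrease one part by $1$ and either increase a different part by $1$ or create a new part equal to $1$, then delete a part that became $0$ and sort in nonincreasing order (the result being different from the original). Exponent notation $a^k$ denotes $k$ parts equal to $a$; when $b=2$, $\alpha(\rho)=(a+1,a-1)$. $D_d(n)$ is the set of vertices of $G_n$ of degree $d$. The local simplex dimension of a vertex $v$ is $m-1$, where $m$ is the largest size of a clique of $G_n$ containing $v$ (i.e. the largest dimension of a simplex containing $v$ in the clique complex of $G_n$); $L_r(n)$ is the set of vertices of local simplex dimension $r$. *)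

(* Defs.v *)
From mathcomp Require Import all_boot.
Set Implicit Arguments. Unset Strict Implicit. Unset Printing Implicit Defensive.

Definition is_partition (n : nat) (p : seq nat) : bool :=
  [&& sorted geq p, all (fun x => 0 < x) p & sumn p == n].

Definition normalize (s : seq nat) : seq nat :=
  sort geq (filter (fun x => 0 < x) s).

(* Elementary unit transfer: decrease part i by 1 and increase part j != i
   by 1; j = size p means "create a new part equal to 1" (incr_nth pads). *)
Definition transfer (p : seq nat) (i j : nat) : seq nat :=
  normalize (incr_nth (set_nth 0 p i (nth 0 p i).-1) j).

Definition step (p q : seq nat) : Prop :=
  exists i j, [/\ i < size p, j <= size p, i != j, q = transfer p i j & q != p].

Definition adj (n : nat) (p q : seq nat) : Prop :=
  [/\ is_partition n p, is_partition n q & (step p q \/ step q p)].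

Definition has_degree (n : nat) (p : seq nat) (d : nat) : Prop :=
  exists s : seq (seq nat),
    [/\ uniq s, (forall q, q \in s <-> adj n p q) & size s = d].

Definition in_D (n d : nat) (p : seq nat) : Prop :=
  is_partition n p /\ has_degree n p d.

Definition clique (n : nat) (K : seq (seq nat)) : Prop :=
  [/\ uniq K, (forall x, x \in K -> is_partition n x) &
      (forall x y, x \in K -> y \in K -> x != y -> adj n x y)].

Definition maximal_clique (n : nat) (K : seq (seq nat)) : Prop :=
  clique n K /\
  (forall K', clique n K' -> {subset K <= K'} -> {subset K' <= K}).

Definition local_simplex_dim (n : nat) (p : seq nat) (r : nat) : Prop :=
  (exists K, [/\ clique n K, p \in K & size K = r.+1]) /\
  (forall K, clique n K -> p \in K -> size K <= r.+1).

Definition in_L (n r : nat) (p : seq nat) : Prop :=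
  is_partition n p /\ local_simplex_dim n p r.

Definition rho_part (a b : nat) : seq nat := nseq b a.
Definition alpha_part (a b : nat) : seq nat := a.+1 :: nseq (b - 2) a ++ [:: a - 1].
Definition beta_part (a b : nat) : seq nat := nseq (b - 1) a ++ [:: a - 1; 1].

(* Main.v *)
Require Import Defs.
From mathcomp Require Import all_boot.
From mathcomp Require Import zify.


Lemma count_set_nth (P : pred nat) s i y : i < size s ->
  count P (set_nth 0 s i y) + P (nth 0 s i) = count P s + P y.
Proof.
elim: s i => [|x s IH] [|i] //= Hi; first lia.
have := IH i Hi; lia.
Qed.

Lemma count_incr_nth (P : pred nat) s j : j < size s ->
  count P (incr_nth s j) + P (nth 0 s j) = count P s + P (nth 0 s j).+1.
Proof.
elim: s j => [|x s IH] [|j] //= Hj; first lia.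
have := IH j Hj; lia.
Qed.

Lemma incr_nth_size s : incr_nth s (size s) = s ++ [:: 1].
Proof. by elim: s => //= x s ->. Qed.

Lemma transfer_count (P : pred nat) p i j :
  all (fun x => 0 < x) p -> i < size p -> j <= size p -> i != j ->
  count P (transfer p i j) + P (nth 0 p i) +
     (if j < size p then nat_of_bool (P (nth 0 p j)) else 0)
  = count P p + (P (nth 0 p i).-1 && (0 < (nth 0 p i).-1)) +
     (if j < size p then nat_of_bool (P (nth 0 p j).+1) else nat_of_bool (P 1)).
Proof.
move=> /allP Hpos Hi Hj Hij.
have Hx : 0 < nth 0 p i by apply: Hpos; apply: mem_nth.
rewrite /transfer /normalize count_sort count_filter.
set Q := predI P (fun x => 0 < x).
have HQ : count Q p = count P p.
  apply: eq_in_count => z /Hpos zp; by rewrite /Q /= zp andbT.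
have C1 := @count_set_nth Q p i (nth 0 p i).-1 Hi.
have Hsz : size (set_nth 0 p i (nth 0 p i).-1) = size p.
  rewrite size_set_nth; lia.
case: ltnP => Hjs.
- have C2 := @count_incr_nth Q (set_nth 0 p i (nth 0 p i).-1) j.
  rewrite Hsz nth_set_nth /= in C2.
  have Eji : (j == i) = false by apply/eqP => E; rewrite E eqxx in Hij.
  have Hy : 0 < nth 0 p j by apply: Hpos; apply: mem_nth.
  move: (C2 Hjs) C1; rewrite HQ Eji.
  rewrite /Q /= Hx Hy !andbT; lia.
- have Ej : j = size p by lia.
  rewrite Ej -{1}Hsz incr_nth_size count_cat /=.
  move: C1; rewrite HQ /Q /= Hx !andbT; lia.
Qed.

Set Implicit Arguments. Unset Strict Implicit.

Lemma sorted_count_eq (s t : seq nat) : sorted geq s -> sorted geq t ->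
  (forall P : pred nat, count P s = count P t) -> s = t.
Proof.
move=> Hs Ht HP; apply: (sorted_eq _ _ Hs Ht); last by apply/permP.
- by move=> y x z /= h1 h2; apply: leq_trans h2 h1.
- by move=> x y /andP [h1 h2]; apply/eqP; rewrite eqn_leq; apply/andP; split.
Qed.

Lemma path_nseq a k x t : a <= x -> path geq a t -> path geq x (nseq k a ++ t).
Proof.
elim: k x => [|k IH] x hx ht /=.
  by case: t ht => //= y t /andP [h1 h2]; rewrite h2 andbT; apply: leq_trans h1 hx.
by rewrite hx /=; apply: IH.
Qed.

Section S.
Variables a b : nat.
Hypothesis Ha : 2 <= a.
Hypothesis Hb : 2 <= b.

Lemma alphaE : alpha_part a b = a.+1 :: nseq (b - 2) a ++ [:: a.-1].
Proof. by rewrite /alpha_part subn1. Qed.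
Lemma betaE : beta_part a b = a :: nseq (b - 2) a ++ [:: a.-1; 1].
Proof. rewrite /beta_part (_ : b - 1 = (b - 2).+1); last lia. by rewrite subn1. Qed.

Lemma sorted_rho : sorted geq (rho_part a b).
Proof.
rewrite /rho_part; case: b => //= b'; have := @path_nseq a b' a [::] (leqnn a) isT.
by rewrite cats0.
Qed.
Lemma sorted_alpha : sorted geq (alpha_part a b).
Proof. rewrite alphaE /=; apply: path_nseq => //=; rewrite andbT; lia. Qed.
Lemma sorted_beta : sorted geq (beta_part a b).
Proof. rewrite betaE /=; apply: path_nseq => //=; rewrite andbT; lia. Qed.

Lemma count_rho P : count P (rho_part a b) = P a * b.
Proof. by rewrite count_nseq. Qed.
Lemma count_alpha P : count P (alpha_part a b) = P a.+1 + P a * (b - 2) + P a.-1.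
Proof. by rewrite alphaE /= count_cat count_nseq /= addn0 addnA. Qed.
Lemma count_beta P : count P (beta_part a b) = P a * (b - 1) + P a.-1 + P 1.
Proof. rewrite betaE /= count_cat count_nseq /= addn0; case: (P a) => /=; lia. Qed.

Lemma part_rho : is_partition (a * b) (rho_part a b).
Proof.
rewrite /is_partition sorted_rho /rho_part all_nseq sumn_nseq /=.
rewrite orbC (_ : 0 < a) //; lia.
Qed.
Lemma part_alpha : is_partition (a * b) (alpha_part a b).
Proof.
rewrite /is_partition sorted_alpha alphaE /= all_cat all_nseq sumn_cat sumn_nseq /=.
have -> : 0 < a by lia.
have -> : 0 < a.-1 by rewrite -subn1; lia.
rewrite orbT /=; apply/eqP; rewrite -subn1.
have E : b = (b - 2) + 2 by lia.
rewrite [in RHS]E mulnDr; lia.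
Qed.
Lemma part_beta : is_partition (a * b) (beta_part a b).
Proof.
rewrite /is_partition sorted_beta betaE /= all_cat all_nseq sumn_cat sumn_nseq /=.
have -> : 0 < a by lia.
have -> : 0 < a.-1 by rewrite -subn1; lia.
rewrite orbT /=; apply/eqP; rewrite -subn1.
have E : b = (b - 2) + 2 by lia.
rewrite [in RHS]E mulnDr; lia.
Qed.

Lemma rho_transfer i j : i < b -> j <= b -> i != j ->
  transfer (rho_part a b) i j = if j < b then alpha_part a b else beta_part a b.
Proof.
move=> Hi Hj Hij.
have Hpos : all (fun x => 0 < x) (rho_part a b) by rewrite all_nseq orbC (_ : 0 < a) //; lia.
have Hs : size (rho_part a b) = b by rewrite size_nseq.
have H P := @transfer_count P (rho_part a b) i j Hpos.
have Ha1 : 0 < a.-1 by rewrite -subn1; lia.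
case: ltnP => Hjb.
- apply: sorted_count_eq; [apply: sort_sorted; move=> x y; exact: leq_total | exact: sorted_alpha|] => P.
  have := H P; rewrite Hs => /(_ Hi Hj Hij); rewrite /rho_part !nth_nseq Hi Hjb Ha1 andbT count_alpha count_nseq.
  case: (P a) => /=; lia.
- apply: sorted_count_eq; [apply: sort_sorted; move=> x y; exact: leq_total | exact: sorted_beta|] => P.
  have := H P; rewrite Hs => /(_ Hi Hj Hij); rewrite /rho_part !nth_nseq Hi ltnNge Hjb Ha1 andbT count_beta count_nseq.
  case: (P a) => /=; lia.
Qed.

Lemma alpha_beta : transfer (alpha_part a b) 0 (size (alpha_part a b)) = beta_part a b.
Proof.
have /and3P [_ Hpos _] := part_alpha.
have Hsz : 0 < size (alpha_part a b) by rewrite alphaE.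
have H P := @transfer_count P (alpha_part a b) 0 (size (alpha_part a b)) Hpos Hsz (leqnn _) (negbT (ltn_eqF Hsz)).
apply: sorted_count_eq; [apply: sort_sorted; move=> x y; exact: leq_total | exact: sorted_beta|] => P.
have := H P; rewrite ltnn.
rewrite count_alpha count_beta (_ : nth 0 (alpha_part a b) 0 = a.+1); last by rewrite alphaE.
rewrite /= (_ : 0 < a) ?andbT; last lia.
case: (P a) => /=; lia.
Qed.

Lemma into_rho q i j : all (fun x => 0 < x) q -> sorted geq q ->
  i < size q -> j <= size q -> i != j -> transfer q i j = rho_part a b ->
  rho_part a b != q -> q = alpha_part a b \/ q = beta_part a b.
Proof.
move=> Hpos Hsq Hi Hj Hij Ht Hne.
have H P := @transfer_count P q i j Hpos Hi Hj Hij.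
move: H; rewrite Ht => H.
set x := nth 0 q i in H.
have xq0 : 0 < count (pred1 x) q by rewrite -has_count has_pred1 mem_nth.
have xq : 0 < @count nat (@PredOfSimpl.coerce nat (pred1 x)) q := xq0.
clear xq0.
have x0 : 0 < x by move/allP: Hpos; apply; apply: mem_nth.
case Hjs: (j < size q) in H; last first.
  have E := H (pred1 1); rewrite count_rho /= in E.
  rewrite (_ : (a == 1) = false) in E; last by apply/eqP; lia.
  move: E; case: eqP => [ex|nx].
    by move: xq; rewrite ex /=; lia.
  lia.
set y := nth 0 q j in H.
clearbody x y.
have E1 := H (pred1 y.+1); have E2 := H (pred1 x); have E3 := H (pred1 x.-1).
rewrite !count_rho /= in E1 E2 E3.
have ey : y.+1 = a.
  move: E1 E2; case: (eqP : reflect (a = y.+1) (a == y.+1)) => [//|ne].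
  case: (eqP : reflect (a = x) (a == x)) => ax; rewrite ?eqxx /= => e1 e2; clear -xq ne ax e1 e2; lia.
have Hsc P : count P q = count P (rho_part a b) + P x + P y - (P x.-1 && (0 < x.-1)) - P a.
  by have := H P; rewrite ey => ->; rewrite -subnDA -addnA addnK.
have cases : [\/ x = a.+1, x = 1 | x = a].
  case: (eqVneq x 1) => [->|x1]; first by constructor 2.
  case: (eqVneq x a.+1) => [->|xa]; first by constructor 1.
  constructor 3.
  have xp : 0 < x.-1 by rewrite -subn1; lia.
  clear H Hsc E1 E2; move: E3; rewrite xp eqxx /= -ey.
  have -> : (y.+1 == x.-1) = false by apply/eqP; rewrite -subn1; lia.
  have -> : (x == x.-1) = false by apply/eqP; rewrite -subn1; lia.
  rewrite -!subn1; case: eqP; lia.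
have eya : y = a.-1 by rewrite -ey.
clear E1 E2 E3 H xq.
case: cases => ex.
- left; apply: sorted_count_eq => //; first exact: sorted_alpha.
  move=> P; rewrite Hsc count_rho count_alpha ex eya /= (_ : 0 < a) //; last lia.
  case: (P a) => /=; lia.
- right; apply: sorted_count_eq => //; first exact: sorted_beta.
  move=> P; rewrite Hsc count_rho count_beta ex eya /=.
  case: (P a) => /=; lia.
- exfalso; move/eqP: Hne; apply; apply: sorted_count_eq => //; first exact: sorted_rho.
  move=> P; rewrite Hsc ex eya (_ : 0 < a.-1); last by rewrite -subn1; lia.
  rewrite andbT; lia.
Qed.
End S.

Unset Implicit Arguments. Set Strict Implicit.


Theorem proposition3p3 (a b : nat) : 2 <= a -> 2 <= b ->
  let n := a * b in
  let rho := rho_part a b in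
  let alpha := alpha_part a b in
  let beta := beta_part a b in
  [/\ has_degree n rho 2,
      (forall q, adj n rho q <-> q = alpha \/ q = beta),
      clique n [:: rho; alpha; beta],
      maximal_clique n [:: rho; alpha; beta] /\
        (forall K, maximal_clique n K -> rho \in K ->
           perm_eq K [:: rho; alpha; beta])
    & in_D n 2 rho /\ in_L n 2 rho].
Proof.
move=> Ha Hb; cbv zeta.
have Pr := part_rho Ha Hb; have Pa := part_alpha Ha Hb; have Pb := part_beta Ha Hb.
have adj_sym p q : adj (a * b) p q -> adj (a * b) q p.
  by case=> h1 h2 [h3|h3]; split => //; [right|left].
have nra : rho_part a b != alpha_part a b.
  apply/eqP => E; have := congr1 (fun s => nth 0 s 0) E.
  rewrite /= /rho_part nth_nseq /=; case: ifP; lia.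
have nab : alpha_part a b != beta_part a b.
  apply/eqP => E; have := congr1 (fun s => nth 0 s 0) E.
  rewrite alphaE betaE /=; lia.
have nrb : rho_part a b != beta_part a b.
  apply/eqP => E; have := congr1 size E; rewrite betaE // /rho_part /= size_cat !size_nseq /=; lia.
have Hsr : size (rho_part a b) = b by rewrite size_nseq.
have Nbr q : adj (a * b) (rho_part a b) q <-> q = alpha_part a b \/ q = beta_part a b.
  split.
  - case=> _ Pq [[i [j [Hi Hj Hij -> Hne]]] | [i [j [Hi Hj Hij Ht Hne]]]].
    + rewrite Hsr in Hi Hj; rewrite rho_transfer //; case: ifP; auto.
    + case/and3P: Pq => Hsq Hpos _; exact: (into_rho Ha Hb Hpos Hsq Hi Hj Hij (esym Ht)).
  - case=> ->; split => //; left.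
    + exists 0, 1; split; rewrite ?Hsr //; try lia.
      * rewrite rho_transfer //; try lia.
        by case: ifP => // h; exfalso; lia.
      * by rewrite eq_sym.
    + exists 0, b; split; rewrite ?Hsr //; try lia.
      * rewrite rho_transfer //; try lia.
        by rewrite ltnn.
      * by rewrite eq_sym.
have Aab : adj (a * b) (alpha_part a b) (beta_part a b).
  split => //; left; exists 0, (size (alpha_part a b)).
  have Hs : 0 < size (alpha_part a b) by rewrite alphaE.
  split; [exact: Hs | exact: leqnn | by rewrite neq_ltn Hs | by rewrite alpha_beta | by rewrite eq_sym].
set T := [:: rho_part a b; alpha_part a b; beta_part a b].
have CT : clique (a * b) T.
  split.
  - by rewrite /T /= !inE negb_or nra nrb nab.
  - by move=> x; rewrite !inE => /or3P [] /eqP ->.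
  - move=> x y; rewrite !inE => /or3P [] /eqP -> /or3P [] /eqP ->; rewrite ?eqxx // => _.
    + by apply/Nbr; left.
    + by apply/Nbr; right.
    + by apply: adj_sym; apply/Nbr; left.
    + by apply: adj_sym; apply/Nbr; right.
    + exact: adj_sym Aab.
have Sub K : clique (a * b) K -> rho_part a b \in K -> {subset K <= T}.
  case=> _ _ HK Hr z Hz; rewrite !inE.
  case: (eqVneq z (rho_part a b)) => [-> //|nz].
  have nz' : rho_part a b != z by rewrite eq_sym.
  by case/Nbr: (HK _ _ Hr Hz nz') => ->; rewrite eqxx ?orbT.
have Max : maximal_clique (a * b) T.
  split => // K' CK' ST; apply: Sub => //; apply: ST; by rewrite inE eqxx.
have UT : uniq T by case: CT.
split => //.
- exists [:: alpha_part a b; beta_part a b]; split => //.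
  + by rewrite /= inE nab.
  + by move=> q; rewrite Nbr !inE; split => [/orP [] /eqP|[] ->]; auto; rewrite eqxx ?orbT.
- split => // K [CK MK] Hr.
  apply: uniq_perm => //; first by case: CK.
  move=> z; apply/idP/idP; first exact: (Sub K).
  by apply: MK => //; apply: Sub.
- split; split => //.
  + exists [:: alpha_part a b; beta_part a b]; split => //.
    * by rewrite /= inE nab.
    * by move=> q; rewrite Nbr !inE; split => [/orP [] /eqP|[] ->]; auto; rewrite eqxx ?orbT.
  + split; first by exists T; split => //; rewrite inE eqxx.
    move=> K CK Hr; have := uniq_leq_size _ (Sub K CK Hr); case: CK => UK _ _.
    by move=> /(_ UK).
Qed.
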